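(* A topological space $X$ is dense-pseudocompact if and only if every open subspace of $X$ is dense-pseudocompact.
   Context: A space is pseudocompact if every continuous real-valued function on it is bounded. A space $X$ is dense-pseudocompact if every dense subset of $X$ (with the subspace topology) is pseudocompact. *)

(* Defs.v *)
From HB Require Import structures.
From mathcomp Require Import all_boot all_order all_algebra.
From mathcomp Require Import all_classical all_reals all_analysis.
Set Implicit Arguments. Unset Strict Implicit. Unset Printing Implicit Defensive.
Import Order.TTheory GRing.Theory Num.Theory.
Import numFieldNormedType.Exports.
Local Open Scope classical_set_scope.
Local Open Scope ring_scope.

(* A subset A of a topological space X, with the subspace topology, is
   pseudocompact: every real-valued function continuous on the subspace A
   is bounded on A.  (Functions A -> R are represented as functions X -> R
   whose restriction to A is continuous for the subspace topology.) *)
Definition pseudocompact_in (R : realType) (X : topologicalType) (A : set X) : Prop :=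
  forall f : X -> R, {within A, continuous f} ->
    exists M : R, forall x, A x -> `|f x| <= M.

(* The subspace A is dense-pseudocompact: every subset D of A that is dense
   in the subspace A (i.e. A is contained in the closure of D) is
   pseudocompact (as a subspace; the subspace topology of D inside A
   coincides with its subspace topology inside X). *)
Definition dense_pseudocompact_in (R : realType) (X : topologicalType) (A : set X) : Prop :=
  forall D : set X, D `<=` A -> A `<=` closure D -> pseudocompact_in R D.

Definition dense_pseudocompact (R : realType) (X : topologicalType) : Prop :=
  dense_pseudocompact_in R (@setT X).

(* Main.v *)
Require Import Defs.
From mathcomp Require Import all_boot all_order all_algebra.
From mathcomp Require Import all_classical all_reals all_analysis.
From HB Require Import structures.
Import Order.TTheory GRing.Theory Num.Theory.
Import numFieldNormedType.Exports.
Local Open Scope classical_set_scope.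

Theorem lemma3p2 (R : realType) (X : topologicalType) :
  dense_pseudocompact R X <->
  (forall U : set X, open U -> dense_pseudocompact_in R U).
Proof.
split; last first.
  by move=> H; apply: H; exact: openT.
move=> HX U oU D DU UD f fc.
pose V := ~` closure U.
have oV : open V by rewrite /V openC; exact: closed_closure.
have UV : forall y, U y -> V y -> False.
  by move=> y Uy; apply; apply: subset_closure.
pose g := fun y => if pselect (D y) then f y else 0%R.
have gc : {within D `|` V, continuous g}.
  apply/(@subspace_continuousP _ (D `|` V)) => x Dx.
  have /(@subspace_continuousP _ D) fc' := fc.
  rewrite /from_subspace in fc' *.
  case: (pselect (D x)) => Dxx.
    have -> : g x = f x by rewrite /g; case: pselect.
    move=> W /= nW.
    have nf : within D (nbhs x) (f @^-1` W) by exact: (fc' x Dxx W nW).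
    change (within (D `|` V) (nbhs x) (g @^-1` W)).
    have nU : nbhs x U by apply: open_nbhs_nbhs; split => //; exact: DU.
    rewrite /within /=; near=> y.
    have Uy : U y by near: y.
    have Hf : D y -> W (f y) by near: y.
    move=> Dy.
    have Dyy : D y by destruct Dy as [Dy|Vy]; [exact: Dy|exfalso; exact: (UV y Uy Vy)].
    unfold g; destruct (pselect (D y)) as [pD|nD]; [exact: Hf|exact: (False_ind _ (nD Dyy))].
  have Vx : V x by case: Dx.
  have -> : g x = 0%R by rewrite /g; case: pselect.
  move=> W /= nW.
  change (within (D `|` V) (nbhs x) (g @^-1` W)).
  have nV : nbhs x V by apply: open_nbhs_nbhs; split.
  rewrite /within /=; near=> y.
  have Vy : V y by near: y.
  move=> _.
  unfold g; destruct (pselect (D y)) as [Dy|pD]; last exact: nbhs_singleton.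
  by exfalso; apply: (UV y (DU y Dy) Vy).
have dense : [set: X] `<=` closure (D `|` V).
  move=> x _; case: (pselect (closure U x)) => Cx.
    have h1 : closure D `<=` closure (D `|` V).
      by apply: closureS => y Dy; left.
    have h2 : closure U `<=` closure (closure D) by apply: closureS.
    apply: h1; move: (h2 x Cx).
    by rewrite -(proj1 (closure_id (closure D)) (@closed_closure _ D)).
  by apply: subset_closure; right.
have [M HM] := HX (D `|` V) (fun _ _ => I) dense g gc.
exists M => x Dx.
have := HM x (or_introl Dx).
by rewrite /g; case: pselect.
Unshelve. all: by end_near.
Qed.
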